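(* Let $k \ge 1$ and let $\tau_0, \tau_1, \ldots, \tau_t \in \{0,1\}^{2^k}$ be such that (1) for every $i \in \{1,\dots,t\}$, $\tau_i$ and $\tau_{i-1}$ differ in exactly one coordinate; (2) for every $i \in \{1,\dots,t\}$, $\mathrm{mem}(\tau_i)$ and $\mathrm{mem}(\tau_{i-1})$ differ in exactly one coordinate; and (3) $\mathrm{mem}(\tau_t) = \mathrm{mem}(\tau_0)$. Then $\tau_t = \tau_0$.
   Context: Index the coordinates of $\tau \in \{0,1\}^{2^k}$ by $J \in \{0,1,\dots,2^k-1\}$, and for such $J$ let $\mathrm{bin}(J) \in \{0,1\}^k$ be its binary representation, with coordinates indexed by $j \in \{0,\dots,k-1\}$ so that $J = \sum_j \mathrm{bin}(J)_j 2^j$. The map $\mathrm{mem}: \{0,1\}^{2^k} \to \{0,1\}^k$ is defined by $\mathrm{mem}(\tau)_j = \bigoplus_{J=0}^{2^k-1} \mathrm{bin}(J)_j \cdot \tau_J$ for each $j \in \{0,\dots,k-1\}$. *)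

(* Defs.v *)
From mathcomp Require Import all_boot.
Set Implicit Arguments. Unset Strict Implicit. Unset Printing Implicit Defensive.

Definition bin_digit (J j : nat) : bool := odd (J %/ 2 ^ j).

Definition memmap (k : nat) (tau : {ffun 'I_(2 ^ k) -> bool}) : {ffun 'I_k -> bool} :=
  [ffun j : 'I_k => \big[addb/false]_(J < 2 ^ k) (bin_digit J j && tau J)].

Definition differ_in_one (I : finType) (x y : {ffun I -> bool}) : Prop :=
  #|[set i | x i != y i]| = 1.

(* Main.v *)
Require Import Defs.
From mathcomp Require Import all_boot.

Lemma digits_inj k : forall J J', J < 2 ^ k -> J' < 2 ^ k ->
  (forall j, j < k -> bin_digit J j = bin_digit J' j) -> J = J'.
Proof.
elim: k => [|k IH] J J'.
  by rewrite expn0 !ltnS !leqn0 => /eqP-> /eqP->.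
move=> HJ HJ' H.
have Hs : forall M j, bin_digit M j.+1 = bin_digit M./2 j.
  by move=> M j; rewrite /bin_digit expnS divnMA divn2.
have H0 : odd J = odd J' by have := H 0 isT; rewrite /bin_digit expn0 !divn1.
have Hh : J./2 = J'./2.
  apply: IH.
  - by rewrite -divn2 ltn_divLR // mulnC -expnS.
  - by rewrite -divn2 ltn_divLR // mulnC -expnS.
  by move=> j Hj; rewrite -!Hs; apply: H.
by rewrite -(odd_double_half J) -(odd_double_half J') H0 Hh.
Qed.

Definition goodS {k} (J : 'I_(2 ^ k)) := #|[set j : 'I_k | bin_digit J j]| == 1.

Lemma mem_xor k (x y : {ffun 'I_(2 ^ k) -> bool}) (j : 'I_k) :
  memmap x j (+) memmap y j =
  \big[addb/false]_(J < 2 ^ k) (bin_digit J j && (x J (+) y J)).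
Proof.
rewrite /memmap !ffunE -big_split /=; apply: eq_bigr => J _.
by case: (bin_digit J j); case: (x J); case: (y J).
Qed.

Lemma step k (x y : {ffun 'I_(2 ^ k) -> bool}) :
  differ_in_one x y -> differ_in_one (memmap x) (memmap y) ->
  exists2 J : 'I_(2 ^ k), goodS J & forall J', J' != J -> x J' = y J'.
Proof.
rewrite /differ_in_one => /eqP/cards1P[J HJ] Hm.
have HxJ : forall J', (x J' != y J') = (J' == J).
  by move=> J'; rewrite -in_set1 -HJ inE.
exists J; last by move=> J' /negbTE; rewrite -HxJ => /negbFE/eqP.
rewrite /goodS; apply/eqP; rewrite -[RHS]Hm; apply: eq_card => j; rewrite !inE.
have -> : (memmap x j != memmap y j) = memmap x j (+) memmap y j by case: (memmap x j); case: (memmap y j).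
rewrite mem_xor.
rewrite (bigD1 J) //= big1 ?addbF.
  by have := HxJ J; rewrite eqxx => /negP; case: (x J); case: (y J); rewrite ?andbT.
move=> J' HJ'; have := HxJ J'; rewrite (negbTE HJ').
by case: (x J'); case: (y J'); rewrite ?andbF.
Qed.

Lemma good_uniq k (J J' : 'I_(2 ^ k)) (j : 'I_k) :
  goodS J -> goodS J' -> bin_digit J j -> bin_digit J' j -> J = J'.
Proof.
move=> /cards1P[a Ha] /cards1P[b Hb] h1 h2.
have Ea : forall i : 'I_k, bin_digit J i = (i == a).
  by move=> i; rewrite -in_set1 -Ha inE.
have Eb : forall i : 'I_k, bin_digit J' i = (i == b).
  by move=> i; rewrite -in_set1 -Hb inE.
have ab : a = b by move: h1 h2; rewrite Ea Eb => /eqP-> /eqP->.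
apply: val_inj; apply: (@digits_inj k); rewrite ?ltn_ord // => i Hi.
by have := Ea (Ordinal Hi); have := Eb (Ordinal Hi); rewrite ab => -> ->.
Qed.

Theorem claim3p6 (k t : nat) (tau : nat -> {ffun 'I_(2 ^ k) -> bool}) :
  1 <= k ->
  (forall i, 1 <= i <= t -> differ_in_one (tau i) (tau i.-1)) ->
  (forall i, 1 <= i <= t -> differ_in_one (memmap (tau i)) (memmap (tau i.-1))) ->
  memmap (tau t) = memmap (tau 0) ->
  tau t = tau 0.
Proof.
move=> _ H1 H2 Hm.
have inv : forall i, i <= t -> forall J, ~~ goodS J -> tau i J = tau 0 J.
  elim=> [//|i IH] Hi J HJ.
  have [J0 G0 E] := @step _ _ _ (H1 i.+1 Hi) (H2 i.+1 Hi).
  rewrite E ?IH ?(ltnW Hi) //.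
  by apply: contraNneq HJ => ->.
apply/ffunP => J.
case G: (goodS J); last by apply: inv => //; rewrite G.
have [j Hj] : exists j : 'I_k, bin_digit J j.
  move: G => /cards1P[a Ha]; exists a.
  by have := set11 a; rewrite -Ha inE.
have := congr1 (fun f : {ffun 'I_k -> bool} => f j) Hm => /= E.
have : memmap (tau t) j (+) memmap (tau 0) j = false by rewrite E addbb.
rewrite mem_xor (bigD1 J) //= big1 ?addbF /=.
  by rewrite Hj; case: (tau t J); case: (tau 0 J).
move=> J' HJ'; case G': (goodS J').
  case B: (bin_digit J' j) => //=.
  by move: HJ'; rewrite (@good_uniq _ _ _ _ G G' Hj B) eqxx.
by rewrite inv // ?G' // addbb andbF.
Qed.
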